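(* The Goemans–Williamson algorithm is a spectral algorithm: for every instance $W$, the cut it returns is induced by a generalized least eigenvector of $W$.
   Context: An instance of MAXCUT is identified with a non-negative symmetric $n\times n$ matrix $W$ with zero diagonal. A vector $v\in\mathbb R^n$ is a generalized least eigenvector (GLEV) of $W$ if there is a diagonal matrix $D$ such that $v$ is an eigenvector of $W+D$ for the least eigenvalue of $W+D$ (equivalently, $v\in\ker(W+\Delta)$ for some diagonal $\Delta$ with $W+\Delta\succeq0$). A vector $v$ induces the cut $(S,\bar S)$ with $S=\{i: v_i>0\}$. An algorithm for MAXCUT is spectral if it always returns a cut induced by a GLEV. The Goemans–Williamson (GW) algorithm: compute an optimal solution $P$ of the SDP ''minimize $\sum_{i,j}P_{ij}W_{ij}$ subject to $P\succeq0$, $P_{ii}=1$ for all $i$''; find $v_1,\dots,v_n$ in the unit sphere $S^{n-1}$ with $P_{ij}=\langle v_i,v_j\rangle$; sample $v\in S^{n-1}$ uniformly; return the cut induced by the vector $u$ with $u_i=\langle v,v_i\rangle$. *)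

(* Defs.v *)
From HB Require Import structures.
From mathcomp Require Import all_boot all_order all_algebra.
From mathcomp Require Import reals.
Set Implicit Arguments. Unset Strict Implicit. Unset Printing Implicit Defensive.
Import Order.TTheory GRing.Theory Num.Theory.
Local Open Scope ring_scope.

Section Defs.
Variable R : realType.
Variable n : nat.

Definition maxcut_instance (W : 'M[R]_n) : Prop :=
  W^T = W /\ (forall i j, 0 <= W i j) /\ (forall i, W i i = 0).

Definition psd (A : 'M[R]_n) : Prop :=
  forall x : 'rV[R]_n, 0 <= (x *m A *m x^T) 0 0.

Definition in_sphere (x : 'rV[R]_n) : Prop := \sum_(k < n) x 0 k ^+ 2 = 1.

Definition dotv (x y : 'rV[R]_n) : R := \sum_(k < n) x 0 k * y 0 k.

(* v is a generalized least eigenvector of W: for some diagonal matrix D,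
   v lies in the eigenspace of W + D for the least eigenvalue of W + D
   (eigenvalue = mathcomp's [eigenvalue]; the zero vector belongs to the
   eigenspace, matching the "v in ker(W + Delta)" formulation). *)
Definition GLEV (W : 'M[R]_n) (v : 'rV[R]_n) : Prop :=
  exists (d : 'rV[R]_n) (lam : R),
    let M := W + diag_mx d in
    [/\ eigenvalue M lam,
        (forall mu, eigenvalue M mu -> lam <= mu)
      & v *m M = lam *: v].

Definition induced_cut (v : 'rV[R]_n) : {set 'I_n} := [set i | 0 < v 0 i].

Definition sdp_feasible (P : 'M[R]_n) : Prop := psd P /\ forall i, P i i = 1.

Definition sdp_obj (W P : 'M[R]_n) : R := \sum_(i < n) \sum_(j < n) P i j * W i j.

Definition sdp_optimal (W P : 'M[R]_n) : Prop :=
  sdp_feasible P /\ forall Q, sdp_feasible Q -> sdp_obj W P <= sdp_obj W Q.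

Definition gw_vector (V : 'M[R]_n) (v : 'rV[R]_n) : 'rV[R]_n :=
  \row_i dotv v (row i V).

End Defs.

(* Main.v *)
Require Import Defs.
From mathcomp Require Import all_boot all_order all_algebra.
From mathcomp Require Import reals.
From mathcomp Require Import ring lra.
Import Order.TTheory GRing.Theory Num.Theory.
Local Open Scope ring_scope.
Set Implicit Arguments. Unset Strict Implicit.

Lemma quadlem (R : realType) (s b : R) : 0 <= s -> 0 <= b ->
  (forall t, 0 <= t * (s + s) + t ^+ 2 * b) -> s = 0.
Proof.
move=> hs hb H.
have hb1 : b + 1 != 0 by rewrite gt_eqF // ltr_wpDl.
set t := - s / (b + 1).
have h := H t.
have e : s ^+ 2 * (b + 2) = - (t * (s + s) + t ^+ 2 * b) * (b + 1) ^+ 2 by rewrite /t; field.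
have : s ^+ 2 * (b + 2) <= 0.
  rewrite e mulNr oppr_le0; apply: mulr_ge0 => //; exact: sqr_ge0.
move=> h2; apply/eqP; rewrite -sqrf_eq0 eq_le sqr_ge0 andbT.
nra.
Qed.

Lemma termlem (R : realType) (a xi xj t : R) : 0 < t -> t <= 1 ->
  a <= a / ((1 + t * xi ^+ 2) * (1 + t * xj ^+ 2)) +
       t * (`|a| * (xi ^+ 2 + xj ^+ 2 + xi ^+ 2 * xj ^+ 2)).
Proof.
move=> t0 t1.
have hi : 0 <= xi ^+ 2 by apply: sqr_ge0.
have hj : 0 <= xj ^+ 2 by apply: sqr_ge0.
set D := (1 + t * xi ^+ 2) * (1 + t * xj ^+ 2).
have hD : 1 <= D by rewrite /D; nra.
have hD0 : 0 < D by lra.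
have hD1 : D - 1 <= t * (xi ^+ 2 + xj ^+ 2 + xi ^+ 2 * xj ^+ 2).
  rewrite /D; nra.
set u := D^-1.
have hu0 : 0 < u by rewrite invr_gt0.
have hu1 : u <= 1 by rewrite invr_le1 // unitfE gt_eqF.
have huD : (1 - u) = (D - 1) * u by rewrite /u mulrBl divff ?gt_eqF // mul1r.
have ha : a * (1 - u) <= `|a| * (1 - u) by apply: ler_wpM2r; [lra | exact: ler_norm].
have h2 : 1 - u <= D - 1 by rewrite huD; nra.
have hab : 0 <= `|a| by [].
have : `|a| * (1 - u) <= `|a| * (t * (xi ^+ 2 + xj ^+ 2 + xi ^+ 2 * xj ^+ 2)).
  by apply: ler_wpM2l => //; lra.
move=> h3.
have e : t * (`|a| * (xi ^+ 2 + xj ^+ 2 + xi ^+ 2 * xj ^+ 2)) = `|a| * (t * (xi ^+ 2 + xj ^+ 2 + xi ^+ 2 * xj ^+ 2)) by ring.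
rewrite e; move: ha h3; rewrite !mulrBr !mulr1 => ha h3.
lra.
Qed.

Lemma termlem2 (R : realType) (a xi xj t : R) : 0 < t -> t <= 1 ->
  a / ((1 + t * xi ^+ 2) * (1 + t * xj ^+ 2)) <= a +
       t * (`|a| * (xi ^+ 2 + xj ^+ 2 + xi ^+ 2 * xj ^+ 2)).
Proof.
move=> t0 t1; have := @termlem R (- a) xi xj t t0 t1.
rewrite normrN mulNr; lra.
Qed.

Lemma limlem (R : realType) (G B : R) : 0 <= B ->
  (forall t, 0 < t -> t <= 1 -> 0 <= G + t * B) -> 0 <= G.
Proof.
move=> hB H; case: (lerP 0 G) => // hG.
have hBG : 0 < B - G by lra.
have hBG' : B - G != 0 by rewrite gt_eqF.
have ht0 : 0 < - G / (B - G) by rewrite divr_gt0 // oppr_gt0.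
have ht1 : - G / (B - G) <= 1 by rewrite ler_pdivrMr // mul1r; lra.
have := H _ ht0 ht1.
have -> : G + - G / (B - G) * B = - (G ^+ 2 / (B - G)) by field.
rewrite oppr_ge0 => h; have : 0 < G ^+ 2 / (B - G).
  by rewrite divr_gt0 // exprn_even_gt0 //= lt_eqF.
lra.
Qed.

Section Work.
Variable R : realType.
Variable n : nat.

Definition qf (A : 'M[R]_n) (f g : 'I_n -> R) : R :=
  \sum_i \sum_j f i * A i j * g j.

Lemma qf_mx (A : 'M[R]_n) (x y : 'rV[R]_n) :
  (x *m A *m y^T) 0 0 = qf A (fun i => x 0 i) (fun j => y 0 j).
Proof.
rewrite /qf mxE exchange_big; apply: eq_bigr => j _.
rewrite !mxE mulr_suml; apply: eq_bigr => i _; by rewrite ?mxE.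
Qed.

Lemma psd_qf (A : 'M[R]_n) : psd A -> forall f, 0 <= qf A f f.
Proof.
move=> H f; have := H (\row_i f i); rewrite qf_mx.
by rewrite /qf; under eq_bigr do under eq_bigr do rewrite !mxE.
Qed.

Lemma qf_psd (A : 'M[R]_n) : (forall f, 0 <= qf A f f) -> psd A.
Proof. by move=> H x; rewrite qf_mx. Qed.

Lemma qf_lin (A : 'M[R]_n) f g (t : R) :
  qf A (fun i => f i + t * g i) (fun i => f i + t * g i) =
  qf A f f + t * (qf A f g + qf A g f) + t ^+ 2 * qf A g g.
Proof.
rewrite /qf mulrDr !mulr_sumr -!big_split /=; apply: eq_bigr => i _.
rewrite !mulr_sumr -!big_split /=; apply: eq_bigr => j _; ring.
Qed.

Lemma sum_diag (F : 'I_n -> 'I_n -> R) (d : 'rV[R]_n) :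
  \sum_i \sum_j F i j * (diag_mx d) i j = \sum_i F i i * d 0 i.
Proof.
apply: eq_bigr => i _; rewrite (bigD1 i) //= mxE eqxx mulr1n big1 ?addr0 //.
by move=> j /negbTE; rewrite mxE eq_sym => ->; rewrite mulr0n mulr0.
Qed.

Lemma qf_diag (A : 'M[R]_n) (d : 'rV[R]_n) f :
  qf (A + diag_mx d) f f = qf A f f + \sum_i d 0 i * f i ^+ 2.
Proof.
rewrite /qf.
transitivity (\sum_i \sum_j (f i * A i j * f j + (f i * f j) * (diag_mx d) i j)).
  by apply: eq_bigr => i _; apply: eq_bigr => j _; rewrite mxE; ring.
under eq_bigr do rewrite big_split /=.
rewrite big_split /= sum_diag; congr (_ + _); apply: eq_bigr => i _; ring.
Qed.

Lemma psd_ker (M : 'M[R]_n) f : (forall g, 0 <= qf M g g) ->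
  (forall i j, M i j = M j i) -> qf M f f = 0 ->
  forall j, \sum_i f i * M i j = 0.
Proof.
move=> Hpsd Hsym H0.
pose z j := \sum_i f i * M i j.
have e1 : qf M f z = \sum_j z j ^+ 2.
  rewrite /qf exchange_big; apply: eq_bigr => j _.
  by rewrite expr2 /z mulr_suml.
have e2 : qf M z f = qf M f z.
  rewrite /qf exchange_big; apply: eq_bigr => i _; apply: eq_bigr => j _.
  by rewrite mulrC [z j * _]mulrC mulrA Hsym.
have hs : 0 <= \sum_j z j ^+ 2 by apply: sumr_ge0 => j _; apply: sqr_ge0.
have hs0 := @quadlem R _ _ hs (Hpsd z).
have : \sum_j z j ^+ 2 = 0.
  apply: hs0 => t; have := Hpsd (fun i => f i + t * z i).
  by rewrite qf_lin H0 add0r e2 e1.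
move=> hz k; have := psumr_eq0P (fun j _ => sqr_ge0 (z j)) hz (i := k) isT.
by move/eqP; rewrite sqrf_eq0 => /eqP.
Qed.

Lemma sum_sq (K : R) (a : 'I_n -> R) :
  \sum_i \sum_j K * a i * a j = K * (\sum_i a i) ^+ 2.
Proof.
rewrite expr2 mulrA [K * _]mulr_sumr mulr_suml; apply: eq_bigr => i _.
rewrite mulr_sumr; apply: eq_bigr => j _; ring.
Qed.

Lemma claim2 (W P : 'M[R]_n) (x : 'I_n -> R) (t : R) :
  sdp_optimal W P -> 0 < t -> t <= 1 ->
  0 <= \sum_i \sum_j W i j * (4 * x i * x j - 2 * (x i ^+ 2 + x j ^+ 2) * P i j)
     + t * \sum_i \sum_j (`|W i j * (4 * x i * x j - 2 * (x i ^+ 2 + x j ^+ 2) * P i j)|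
            * (x i ^+ 2 + x j ^+ 2 + x i ^+ 2 * x j ^+ 2)).
Proof.
move=> [[Ppsd Pdiag] Hopt] t0 t1.
pose dd i := 1 + t * x i ^+ 2.
have dd0 : forall i, 0 < dd i by move=> i; rewrite /dd; have := sqr_ge0 (x i); nra.
have dd0' : forall i, dd i != 0 by move=> i; rewrite gt_eqF.
pose c i := (1 - t * x i ^+ 2) / dd i.
pose e i := x i / dd i.
pose Q := \matrix_(i, j) (c i * c j * P i j + 4 * t * e i * e j).
have Qfeas : sdp_feasible Q.
  split.
    apply: qf_psd => y.
    have -> : qf Q y y = qf P (fun i => y i * c i) (fun i => y i * c i)
        + (4 * t) * (\sum_i y i * e i) ^+ 2.
      rewrite -sum_sq /qf -big_split /=; apply: eq_bigr => i _.
      rewrite -big_split /=; apply: eq_bigr => j _; rewrite mxE; ring.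
    apply: addr_ge0; first exact: psd_qf.
    by apply: mulr_ge0; [lra | apply: sqr_ge0].
  move=> i; rewrite mxE Pdiag /c /e; have := dd0' i; rewrite /dd => hd.
  by field.
have HQ := Hopt Q Qfeas.
pose F := \sum_i \sum_j W i j * (4 * x i * x j - 2 * (x i ^+ 2 + x j ^+ 2) * P i j)
           / (dd i * dd j).
have eQ : sdp_obj W Q = sdp_obj W P + t * F.
  rewrite /sdp_obj /F mulr_sumr -big_split /=; apply: eq_bigr => i _.
  rewrite mulr_sumr -big_split /=; apply: eq_bigr => j _.
  rewrite mxE /c /e /dd; have := dd0' i; have := dd0' j; rewrite /dd => hj hi.
  by field; rewrite hj hi.
have F0 : 0 <= F.
  have : 0 <= t * F by move: HQ; rewrite eQ; lra.
  by rewrite pmulr_rge0.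
have : F <= \sum_i \sum_j W i j * (4 * x i * x j - 2 * (x i ^+ 2 + x j ^+ 2) * P i j)
   + t * \sum_i \sum_j (`|W i j * (4 * x i * x j - 2 * (x i ^+ 2 + x j ^+ 2) * P i j)|
            * (x i ^+ 2 + x j ^+ 2 + x i ^+ 2 * x j ^+ 2)).
  rewrite /F mulr_sumr -big_split /=; apply: ler_sum => i _.
  rewrite mulr_sumr -big_split /=; apply: ler_sum => j _.
  exact: termlem2.
lra.
Qed.

Lemma W_psd (W P : 'M[R]_n) : sdp_optimal W P ->
  (forall i j, W i j = W j i) -> (forall i j, P i j = P j i) ->
  forall x, 0 <= qf W x x - \sum_i (\sum_j W i j * P i j) * x i ^+ 2.
Proof.
move=> Hopt Ws Ps x.
set G := \sum_i \sum_j W i j * (4 * x i * x j - 2 * (x i ^+ 2 + x j ^+ 2) * P i j).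
have hG : 0 <= G.
  apply: (@limlem R _ (\sum_i \sum_j (`|W i j * (4 * x i * x j - 2 * (x i ^+ 2 + x j ^+ 2) * P i j)|
            * (x i ^+ 2 + x j ^+ 2 + x i ^+ 2 * x j ^+ 2)))).
    apply: sumr_ge0 => i _; apply: sumr_ge0 => j _; apply: mulr_ge0 => //.
    by apply: addr_ge0; [apply: addr_ge0|apply: mulr_ge0]; apply: sqr_ge0.
  by move=> t t0 t1; apply: claim2.
have e : G = 4 * qf W x x - 2 * (\sum_i \sum_j W i j * x i ^+ 2 * P i j)
                          - 2 * (\sum_i \sum_j W i j * x j ^+ 2 * P i j).
  rewrite /G /qf mulr_sumr !mulr_sumr -!sumrB; apply: eq_bigr => i _.
  rewrite !mulr_sumr -!sumrB; apply: eq_bigr => j _; ring.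
have e2 : \sum_i \sum_j W i j * x j ^+ 2 * P i j = \sum_i \sum_j W i j * x i ^+ 2 * P i j.
  rewrite exchange_big; apply: eq_bigr => i _; apply: eq_bigr => j _.
  by rewrite Ws Ps.
have e3 : \sum_i \sum_j W i j * x i ^+ 2 * P i j = \sum_i (\sum_j W i j * P i j) * x i ^+ 2.
  apply: eq_bigr => i _; rewrite mulr_suml; apply: eq_bigr => j _; ring.
move: hG; rewrite e e2 e3; lra.
Qed.

End Work.

Theorem corollary3 (R : realType) (n : nat) (W P V : 'M[R]_n) (v : 'rV[R]_n) :
  maxcut_instance W ->
  sdp_optimal W P ->
  (forall i, in_sphere (row i V)) ->
  (forall i j, P i j = dotv (row i V) (row j V)) ->
  in_sphere v ->
  exists w : 'rV[R]_n, GLEV W w /\ induced_cut w = induced_cut (gw_vector V v).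
Proof.
move=> [Wt [Wnn Wd]] Hopt Hrow HP Hv.
have Ws : forall i j, W i j = W j i by move=> i j; rewrite -{1}Wt mxE.
have Ps : forall i j, P i j = P j i.
  by move=> i j; rewrite !HP /dotv; apply: eq_bigr => k _; rewrite mulrC.
have Pdiag := Hopt.1.2.
pose lam i := \sum_j W i j * P i j.
pose d : 'rV[R]_n := \row_i (- lam i).
pose M := W + diag_mx d.
have Mpsd : forall g, 0 <= qf M g g.
  move=> g; rewrite /M qf_diag.
  have := W_psd Hopt Ws Ps g.
  have -> : \sum_i d 0 i * g i ^+ 2 = - \sum_i lam i * g i ^+ 2.
    by rewrite -sumrN; apply: eq_bigr => i _; rewrite mxE mulNr.
  by [].
have Msym : forall i j, M i j = M j i.
  move=> i j; case: (eqVneq i j) => [->|ne] //; by rewrite !mxE Ws (negbTE ne) eq_sym (negbTE ne).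
have hsum : \sum_k qf M (fun i => V i k) (fun i => V i k) = 0.
  rewrite /qf exchange_big /=.
  transitivity (\sum_i \sum_j M i j * P i j).
    apply: eq_bigr => i _; rewrite exchange_big /=; apply: eq_bigr => j _.
    rewrite HP /dotv mulr_sumr; apply: eq_bigr => k _; rewrite !mxE; ring.
  transitivity (\sum_i \sum_j (W i j * P i j + P i j * (diag_mx d) i j)).
    by apply: eq_bigr => i _; apply: eq_bigr => j _; rewrite /M mxE; ring.
  under eq_bigr do rewrite big_split /=.
  rewrite big_split /= sum_diag -big_split /= big1 // => i _.
  by rewrite Pdiag mxE mul1r subrr.
have hker : forall k j, \sum_i V i k * M i j = 0.
  move=> k; apply: psd_ker => //.
  by apply: (psumr_eq0P (fun k _ => Mpsd (fun i => V i k)) hsum).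
have [i0 _] : exists i0 : 'I_n, True.
  case: (pickP (fun _ : 'I_n => true)) => [i0 _|h]; first by exists i0.
  exfalso; move: Hv; rewrite /in_sphere big1 => [/eqP|k]; first by rewrite eq_sym oner_eq0.
  by have := h k.
have [k0 hk0] : exists k0, V i0 k0 != 0.
  case: (pickP (fun k => V i0 k != 0)) => [k hk|h]; first by exists k.
  exfalso; move: (Hrow i0); rewrite /in_sphere big1 => [/eqP|k _]; first by rewrite eq_sym oner_eq0.
  by rewrite mxE; move/negbFE/eqP: (h k) => ->; rewrite expr0n.
set w := gw_vector V v.
have wM : w *m M = 0.
  apply/rowP => j; rewrite !mxE.
  transitivity (\sum_k v 0 k * \sum_i V i k * M i j).
    symmetry; under eq_bigr do rewrite mulr_sumr.
    rewrite exchange_big /=; apply: eq_bigr => i _.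
    rewrite !mxE /dotv mulr_suml; apply: eq_bigr => k _; rewrite mxE; ring.
  by rewrite big1 // => k _; rewrite hker mulr0.
exists w; split => //.
exists d, 0; split.
- apply/eigenvalueP; exists (\row_i V i k0).
    apply/rowP => j; rewrite scale0r !mxE.
    rewrite -[RHS](hker k0 j); apply: eq_bigr => i _; by rewrite mxE.
  apply/eqP => h; have := congr1 (fun A : 'rV[R]_n => A 0 i0) h; rewrite !mxE.
  by move/eqP; rewrite (negbTE hk0).
- move=> mu /eigenvalueP [y hy ny].
  have hq := Mpsd (fun i => y 0 i).
  rewrite -qf_mx -/M hy -scalemxAl mxE in hq.
  have [j hj] : exists j, y 0 j != 0.
    case: (pickP (fun j => y 0 j != 0)) => [j hj|h]; first by exists j.
    exfalso; move/eqP: ny; apply; apply/rowP => j; rewrite mxE.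
    by move/negbFE/eqP: (h j).
  have hS : 0 < (y *m y^T) 0 0.
    rewrite mxE (bigD1 j) //= ltr_pwDl //.
      by rewrite mxE -expr2 exprn_even_gt0.
    by apply: sumr_ge0 => i _; rewrite mxE -expr2 sqr_ge0.
  by move: hq; rewrite pmulr_lge0.
- by rewrite scale0r.
Qed.
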